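(* Let $N\ge3$, $N_e\ge 2$, $L\ge1$ be integers, $P>0$, $\tau\in(0,1)$, $\sigma_r>0$, $c_4\in\mathbb{C}\setminus\{0\}$, $\alpha,\beta\in\mathbb{C}$ with $|\alpha|^2+|\beta|^2=1$, $\alpha\ne0$. For $\theta\in(-\pi/2,\pi/2)$ and $\mathbf{h}\in\mathbb{C}^N\setminus\mathrm{span}(\mathbf{a}(\theta))$, let $\tilde{\mathbf{a}}=\mathbf{a}/\|\mathbf{a}\|$, $\tilde{\mathbf{h}}=\frac{\mathbf{h}-(\tilde{\mathbf{a}}^H\mathbf{h})\tilde{\mathbf{a}}}{\|\mathbf{h}-(\tilde{\mathbf{a}}^H\mathbf{h})\tilde{\mathbf{a}}\|}$, $\mathbf{t}_1=\alpha\tilde{\mathbf{a}}+\beta\tilde{\mathbf{h}}$, $\mathbf{t}_3,\dots,\mathbf{t}_N$ an orthonormal basis of the orthogonal complement of $\mathrm{span}\{\tilde{\mathbf{a}},\tilde{\mathbf{h}}\}$, and $\mathbf{R}_x=P\tau\mathbf{t}_1\mathbf{t}_1^H+\frac{(1-\tau)P}{N-2}\sum_{i=3}^N\mathbf{t}_i\mathbf{t}_i^H$. For $\phi\in(-\pi/2,\pi/2)$ define $\mathrm{CRB}(\phi)=\frac{\sigma_r^2}{2|c_4|^2L\|\mathbf{c}'(\phi)\|^2\,\mathbf{a}^H\mathbf{R}_x\mathbf{a}}$. Then $$\mathrm{CRB}(\phi)=\frac{\sigma_r^2}{2|c_4|^2L\,P\tau\,\|\mathbf{c}'\|^2|\alpha|^2N},\qquad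 \|\mathbf{c}'\|^2=\frac{\pi^2\cos^2(\phi)N_e(N_e^2-1)}{12}.$$ Moreover, if $\phi\sim\mathcal{U}(-\pi/2,\pi/2)$ then for $\epsilon>0$, with $u(\epsilon)=\sqrt6\,\sigma_r\big(\epsilon N_eN\pi^2LP|c_4|^2|\alpha|^2\tau(N_e^2-1)\big)^{-1/2}$, $P(\mathrm{CRB}(\phi)>\epsilon)=\frac2\pi\sin^{-1}(u(\epsilon))$ if $u(\epsilon)<1$, and $=1$ otherwise.
   Context: $j=\sqrt{-1}$. $\mathbf{a}(\theta)\in\mathbb{C}^N$ has $i$-th entry $e^{-j\pi\sin(\theta)\frac{N-(2i-1)}{2}}$; $\mathbf{c}(\phi)\in\mathbb{C}^{N_e}$ has $i$-th entry $e^{-j\pi\sin(\phi)\frac{N_e-(2i-1)}{2}}$ and $\mathbf{c}'=\partial\mathbf{c}/\partial\phi$. $\mathrm{CRB}(\phi)$ is the Cramér–Rao bound of a strong sensing eavesdropper (one knowing the transmitted signal) for the target angle $\phi$, under the SSJB precoding scheme with transmit covariance $\mathbf{R}_x$. *)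

(* Defs.v *)
From HB Require Import structures.
From mathcomp Require Import all_boot all_order all_algebra.
From mathcomp Require Import all_classical all_reals all_analysis.
From mathcomp Require Import complex.
Set Implicit Arguments. Unset Strict Implicit. Unset Printing Implicit Defensive.
Import Order.TTheory GRing.Theory Num.Theory.
Local Open Scope ring_scope.
Local Open Scope complex_scope.

Notation normc := Normc.normc.

Section Defs.
Variable R : realType.
Local Notation C := (R[i]).

Definition cexpj (x : R) : C := cos x +i* sin x.

(* uniform linear array steering vector of size n:
   i-th entry (1-indexed) e^{-j pi sin(x) (n-(2i-1))/2};
   with 0-indexed i the entry is e^{-j pi sin(x) (n-(2i+1))/2}. *)
Definition steer (n : nat) (x : R) : 'cV[C]_n :=
  \col_(i < n) cexpj (- (pi * sin x * ((n%:R - (2 * i%:R + 1)) / 2))).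

Definition avec (N : nat) (theta : R) : 'cV[C]_N := steer N theta.
Definition cvec (Ne : nat) (phi : R) : 'cV[C]_Ne := steer Ne phi.

Definition cprime (Ne : nat) (phi : R) : 'cV[C]_Ne :=
  \col_(i < Ne)
    ((derive1 (fun x : R => complex.Re (cvec Ne x i 0)) phi) +i*
     (derive1 (fun x : R => complex.Im (cvec Ne x i 0)) phi)).

Definition hadj (m n : nat) (A : 'M[C]_(m, n)) : 'M[C]_(n, m) :=
  (map_mx (@conjc R) A)^T.

Definition vnorm (n : nat) (v : 'cV[C]_n) : R :=
  Num.sqrt (\sum_(i < n) normc (v i 0) ^+ 2).

Definition atil (N : nat) (theta : R) : 'cV[C]_N :=
  ((vnorm (avec N theta))^-1)%:C *: avec N theta.

Definition hperp (N : nat) (theta : R) (h : 'cV[C]_N) : 'cV[C]_N :=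
  h - ((hadj (atil N theta) *m h) 0 0) *: atil N theta.
Definition htil (N : nat) (theta : R) (h : 'cV[C]_N) : 'cV[C]_N :=
  ((vnorm (hperp theta h))^-1)%:C *: hperp theta h.

Definition t1 (N : nat) (theta : R) (h : 'cV[C]_N) (alpha beta : C) : 'cV[C]_N :=
  alpha *: atil N theta + beta *: htil theta h.

(* R_x = P tau t1 t1^H + (1-tau) P/(N-2) sum_{i=3}^N t_i t_i^H,
   where t : 'I_(N-2) -> C^N enumerates t_3, ..., t_N *)
Definition Rx (N : nat) (P tau : R) (theta : R) (h : 'cV[C]_N) (alpha beta : C)
  (t : 'I_(N - 2) -> 'cV[C]_N) : 'M[C]_N :=
  (P * tau)%:C *: (t1 theta h alpha beta *m hadj (t1 theta h alpha beta))
  + ((1 - tau) * P / (N - 2)%:R)%:C *: \sum_(i < N - 2) (t i *m hadj (t i)).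

(* CRB(phi) = sigma_r^2 / (2 |c4|^2 L ||c'(phi)||^2 a^H R_x a)  (complex-valued;
   a^H R_x a is the 1x1 matrix entry) *)
Definition CRB (N Ne L : nat) (P tau sr : R) (c4 alpha beta : C) (theta : R)
  (h : 'cV[C]_N) (t : 'I_(N - 2) -> 'cV[C]_N) (phi : R) : C :=
  (sr ^+ 2)%:C /
  ((2 * normc c4 ^+ 2 * L%:R * vnorm (cprime Ne phi) ^+ 2)%:C *
   (hadj (avec N theta) *m Rx P tau theta h alpha beta t *m avec N theta) 0 0).

End Defs.

(* Main.v *)
Require Import Defs.
From HB Require Import structures.
From mathcomp Require Import all_boot all_order all_algebra.
From mathcomp Require Import all_classical all_reals all_analysis.
From mathcomp Require Import complex.
From mathcomp Require Import ring lra.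
Import Order.TTheory GRing.Theory Num.Theory.
Local Open Scope ring_scope.
Local Open Scope complex_scope.


Module M0.
Local Open Scope ring_scope.
Local Open Scope complex_scope.

Section A.
Variable R : realType.
Lemma der_cos (k x : R) : derive1 (fun y => cos (-(pi * sin y * k))) x
   = sin (-(pi * sin x * k)) * (pi * cos x * k).
Proof.
have hg : is_derive x 1 (fun y : R => -(pi * sin y * k)) (-(pi * cos x * k)).
  have -> : (fun y : R => -(pi * sin y * k)) = (-(pi*k)) \*: (@sin R).
    by apply/funext => y /=; rewrite /GRing.scale /=; ring.
  apply: is_derive_eq; rewrite /GRing.scale /=; ring.
have := is_derive1_comp (is_derive_cos _) hg.
move=> H; rewrite derive1E (@derive_val _ _ _ _ _ _ _ H); ring.
Qed.
Lemma der_sin (k x : R) : derive1 (fun y => sin (-(pi * sin y * k))) x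
   = - cos (-(pi * sin x * k)) * (pi * cos x * k).
Proof.
have hg : is_derive x 1 (fun y : R => -(pi * sin y * k)) (-(pi * cos x * k)).
  have -> : (fun y : R => -(pi * sin y * k)) = (-(pi*k)) \*: (@sin R).
    by apply/funext => y /=; rewrite /GRing.scale /=; ring.
  apply: is_derive_eq; rewrite /GRing.scale /=; ring.
have := is_derive1_comp (is_derive_sin _) hg.
move=> H; rewrite derive1E (@derive_val _ _ _ _ _ _ _ H); ring.
Qed.

Lemma sum_id (n : nat) : \sum_(i < n) (i%:R : R) = n%:R * (n%:R - 1) / 2.
Proof.
elim: n => [|n IH]; first by rewrite big_ord0; ring.
rewrite big_ord_recr /= IH -natr1.
have h2 : (2 : R) != 0 by rewrite pnatr_eq0. by field.
Qed.

Lemma sum_sq (n : nat) : \sum_(i < n) (i%:R : R) ^+ 2 = n%:R * (n%:R - 1) * (2 * n%:R - 1) / 6.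
Proof.
elim: n => [|n IH]; first by rewrite big_ord0; ring.
rewrite big_ord_recr /= IH -natr1. have h6 : (6 : R) != 0 by rewrite pnatr_eq0. by field.
Qed.

Lemma sum_k (n : nat) : \sum_(i < n) ((n%:R - (2 * (i%:R : R) + 1)) / 2) ^+ 2
  = n%:R * (n%:R ^+ 2 - 1) / 12.
Proof.
have -> : \sum_(i < n) ((n%:R - (2 * (i%:R : R) + 1)) / 2) ^+ 2 =
   \sum_(i < n) ((n%:R - 1)^+2 / 4 - (n%:R - 1) * (i%:R:R) + (i%:R:R)^+2).
  apply: eq_bigr => i _. have h2 : (2 : R) != 0 by rewrite pnatr_eq0. have h4 : (4 : R) != 0 by rewrite pnatr_eq0. by field.
rewrite big_split /= big_split /= sumr_const card_ord sumrN -mulr_sumr.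
rewrite sum_id sum_sq.
have h : (12 : R) != 0 by rewrite pnatr_eq0. have h6 : (6 : R) != 0 by rewrite pnatr_eq0.
have h2 : (2 : R) != 0 by rewrite pnatr_eq0. rewrite -mulr_natr. by field.
Qed.

Lemma normc_sqC (z : R[i]) : ((normc z) ^+ 2)%:C = z * conjc z.
Proof.
case: z => a b /=; rewrite sqr_sqrtr ?addr_ge0 ?sqr_ge0 //.
apply/eqP; rewrite eq_complex /=; apply/andP; split; apply/eqP; ring.
Qed.

Lemma normc_sq (z : R[i]) : (normc z) ^+ 2 = complex.Re z ^+ 2 + complex.Im z ^+ 2.
Proof. by case: z => a b /=; rewrite sqr_sqrtr ?addr_ge0 ?sqr_ge0. Qed.

Lemma normc_cexpj (x : R) : normc (cexpj x) = 1.
Proof. by rewrite /cexpj /= cos2Dsin2 sqrtr1. Qed.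

Lemma vnorm_sq n (v : 'cV[R[i]]_n) : vnorm v ^+ 2 = \sum_(i < n) normc (v i 0) ^+ 2.
Proof. by rewrite /vnorm sqr_sqrtr // sumr_ge0 // => i _; rewrite sqr_ge0. Qed.

Lemma vnorm_a N (th : R) : vnorm (avec N th) ^+ 2 = N%:R.
Proof.
rewrite vnorm_sq (eq_bigr (fun _ => 1)); first by rewrite sumr_const card_ord.
by move=> i _; rewrite /avec /steer mxE normc_cexpj expr1n.
Qed.

Lemma vnorm_cprime Ne (phi : R) : vnorm (cprime Ne phi) ^+ 2 =
   pi ^+ 2 * cos phi ^+ 2 * Ne%:R * (Ne%:R ^+ 2 - 1) / 12.
Proof.
rewrite vnorm_sq.
rewrite (eq_bigr (fun i : 'I_Ne => (pi * cos phi) ^+ 2 * ((Ne%:R - (2 * (i%:R : R) + 1)) / 2) ^+ 2)).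
  rewrite -big_distrr /= sum_k; ring.
move=> i _; rewrite /cprime mxE normc_sq /=.
have -> : (fun x : R => complex.Re (cvec Ne x i 0)) = (fun y => cos (-(pi * sin y * ((Ne%:R - (2 * i%:R + 1)) / 2)))).
  by apply/funext => y; rewrite /cvec /steer mxE.
have -> : (fun x : R => complex.Im (cvec Ne x i 0)) = (fun y => sin (-(pi * sin y * ((Ne%:R - (2 * i%:R + 1)) / 2)))).
  by apply/funext => y; rewrite /cvec /steer mxE.
rewrite der_cos der_sin.
set k := (_ / 2).
have cs := cos2Dsin2 (-(pi * sin phi * k)).
transitivity ((pi * cos phi * k)^+2 * (cos (-(pi * sin phi * k)) ^+2 + sin (-(pi * sin phi * k))^+2)); first ring.
rewrite cs; ring.
Qed.
End A.

End M0.
Import M0.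

Module M1.
Local Open Scope ring_scope.
Local Open Scope complex_scope.
Set Implicit Arguments. Unset Strict Implicit. Unset Printing Implicit Defensive.

Section B.
Variable R : realType.
Local Notation C := R[i].

Definition ip n (v w : 'cV[C]_n) : C := (hadj v *m w) 0 0.

Lemma ipE n (v w : 'cV[C]_n) : ip v w = \sum_i conjc (v i 0) * w i 0.
Proof. by rewrite /ip /hadj !mxE; apply: eq_bigr => i _; rewrite !mxE. Qed.

Lemma ipD n (v w1 w2 : 'cV[C]_n) : ip v (w1 + w2) = ip v w1 + ip v w2.
Proof. by rewrite /ip mulmxDr mxE. Qed.

Lemma ipN n (v w : 'cV[C]_n) : ip v (- w) = - ip v w.
Proof. by rewrite /ip mulmxN mxE. Qed.

Lemma ipZ n (v w : 'cV[C]_n) c : ip v (c *: w) = c * ip v w.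
Proof. by rewrite /ip -scalemxAr mxE. Qed.

Lemma ipZl n (v w : 'cV[C]_n) c : ip (c *: v) w = conjc c * ip v w.
Proof.
rewrite !ipE mulr_sumr; apply: eq_bigr => i _; rewrite mxE rmorphM /=; ring.
Qed.

Lemma ip_conj n (v w : 'cV[C]_n) : ip w v = conjc (ip v w).
Proof.
rewrite !ipE rmorph_sum; apply: eq_bigr => i _; rewrite rmorphM /= conjcK; ring.
Qed.

Lemma quad n (a u : 'cV[C]_n) : (hadj a *m (u *m hadj u) *m a) 0 0 = ip a u * ip u a.
Proof.
rewrite !mulmxA -(mulmxA (hadj a *m u)) mxE big_ord1.
by [].
Qed.

Lemma quad_lin n (a : 'cV[C]_n) (M1 M2 : 'M[C]_n) c :
  (hadj a *m (c *: M1 + M2) *m a) 0 0 = c * (hadj a *m M1 *m a) 0 0 + (hadj a *m M2 *m a) 0 0.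
Proof. by rewrite mulmxDr mulmxDl mxE -scalemxAr -scalemxAl mxE. Qed.

Lemma quad_sum n m (a : 'cV[C]_n) (F : 'I_m -> 'M[C]_n) :
  (hadj a *m (\sum_i F i) *m a) 0 0 = \sum_i (hadj a *m F i *m a) 0 0.
Proof. by rewrite mulmx_sumr mulmx_suml summxE. Qed.

End B.

End M1.
Import M1.

Module M2.
Local Open Scope ring_scope.
Local Open Scope complex_scope.
Set Implicit Arguments. Unset Strict Implicit. Unset Printing Implicit Defensive.

Section C.
Variable R : realType.
Local Notation C := R[i].

Lemma quadRx N (P tau theta : R) (h : 'cV[C]_N) (alpha beta : C) (t : 'I_(N - 2) -> 'cV[C]_N) :
  (0 < N)%N -> (forall i, hadj (atil N theta) *m t i = 0) ->
  (hadj (avec N theta) *m Rx P tau theta h alpha beta t *m avec N theta) 0 0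
  = (P * tau * normc alpha ^+ 2 * N%:R)%:C.
Proof.
move=> N0 Ht.
have s2 := @vnorm_a R N theta.
set a := avec N theta in s2 *.
set s := vnorm a in s2.
have s0 : s != 0.
  apply/eqP => s0; move: s2; rewrite s0 expr0n /= => /eqP; rewrite eq_sym pnatr_eq0.
  by move/eqP => N00; move: N0; rewrite N00.
have sC0 : s%:C != 0 :> C by rewrite fmorph_eq0.
have sC2 : s%:C ^+ 2 = N%:R :> C by rewrite -rmorphXn s2 rmorph_nat.
have atilE : atil N theta = s^-1%:C *: a by [].
have ipaa : ip a a = N%:R.
  rewrite ipE (eq_bigr (fun _ => 1)) ?sumr_const ?card_ord //.
  move=> i _; rewrite mulrC -normc_sqC /a /avec /steer mxE normc_cexpj expr1n //.
have ipat w : ip (atil N theta) w = s^-1%:C * ip a w by rewrite atilE ipZl conjc_real.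
have ipti i : ip a (t i) = 0.
  have : ip (atil N theta) (t i) = 0 by rewrite /ip Ht mxE.
  rewrite ipat => /eqP.
  rewrite mulf_eq0 => /orP[|/eqP //]; rewrite fmorph_eq0 invr_eq0 (negbTE s0) //.
have iphp : ip a (hperp theta h) = 0.
  rewrite /hperp ipD ipN ipZ -/(ip (atil N theta) h) ipat atilE ipZ ipaa -sC2 fmorphV.
  by field.
have ipht : ip a (htil theta h) = 0 by rewrite /htil ipZ iphp mulr0.
have ipt1 : ip a (t1 theta h alpha beta) = alpha * (s^-1%:C * N%:R).
  by rewrite /t1 ipD !ipZ iphp -/s -/a ipaa; ring.
rewrite /Rx quad_lin quad -scalemxAr -scalemxAl mxE quad_sum big1 ?addr0; last by move=> i _; rewrite quad ipti mul0r.
rewrite mulr0 addr0 (ip_conj a (t1 _ _ _ _)) ipt1.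
have -> : conjc (alpha * ((s^-1)%:C * N%:R)) = conjc alpha * ((s^-1)%:C * N%:R).
  by rewrite !rmorphM /= conjc_nat oppr0.
have -> : (P * tau * normc alpha ^+ 2 * N%:R)%:C = (P*tau)%:C * (alpha * conjc alpha) * N%:R.
  by rewrite -normc_sqC !rmorphM rmorph_nat.
rewrite -sC2 fmorphV.
by field.
Qed.

End C.

End M2.
Import M2.

Module M3.
Local Open Scope ring_scope.
Local Open Scope classical_set_scope.
Set Implicit Arguments. Unset Strict Implicit. Unset Printing Implicit Defensive.

Section D.
Variable R : realType.

Lemma pdf_in (hpi : - (pi / 2) < pi / 2 :> R) (U : set R) :
  U `<=` `[-(pi/2), pi/2] ->
  uniform_prob hpi U = ((pi^-1)%:E * lebesgue_measure U)%E.
Proof.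
Abort.

Lemma prob_itv (hpi : - (pi / 2) < pi / 2 :> R) (x y : R) :
  -(pi/2) <= x -> y <= pi/2 -> x <= y ->
  uniform_prob hpi `]x, y[ = ((y - x) / pi)%:E.
Proof.
move=> ax yb xy.
rewrite /uniform_prob.
rewrite (eq_integral (fun _ => (pi^-1)%:E)); last first.
  move=> z; rewrite inE /= in_itv /= => /andP[xz zy].
  rewrite /uniform_pdf ifT; last by apply/andP; split; lra.
  congr (_%:E); congr (_^-1); lra.
rewrite integral_cst //= lebesgue_measure_itv /= lte_fin.
case: ifPn => xy'.
  by rewrite -EFinD -EFinM mulrC.
have -> : y = x by apply/eqP; rewrite eq_le xy /= leNgt xy'.
by rewrite subrr mul0r mule0.
Qed.

End D.
Section E.
Variable R : realType.
Lemma prob_two (hpi : - (pi / 2) < pi / 2 :> R) (c : R) :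
  0 <= c < pi/2 ->
  uniform_prob hpi (`]-(pi/2), -c[ `|` `]c, pi/2[) = ((pi - 2 * c) / pi)%:E.
Proof.
move=> /andP[c0 cb].
set A : set R := `]-(pi/2), -c[. set B : set R := `]c, pi/2[.
rewrite measureU; last 3 first.
- exact: measurable_itv.
- exact: measurable_itv.
- apply/seteqP; split => // z [] /=; rewrite /A /B /= !in_itv /= => /andP[_ h1] /andP[h2 _]; lra.
change (uniform_prob hpi A + uniform_prob hpi B = ((pi - 2 * c) / pi)%:E)%E.
have h1 : -(pi/2) <= -(pi/2) :> R by []. have h2 : -c <= pi/2 by lra. have h3 : -(pi/2) <= -c by lra. have h4 : -(pi/2) <= c by lra. have h5 : c <= pi/2 by lra. have h6 : pi/2 <= pi/2 :> R by [].
rewrite /A /B (prob_itv hpi h1 h2 h3) (prob_itv hpi h4 h6 h5).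
have pi0 : (pi : R) != 0 by rewrite gt_eqF // pi_gt0.
rewrite -EFinD; congr (_%:E); rewrite -mulrDl; congr (_ / _); lra.
Qed.
End E.
Section F.
Variable R : realType.
Lemma key (sr eps K q u : R) : 0 < sr -> 0 < eps -> 0 < K -> 0 <= q ->
  u = Num.sqrt 6 * sr / Num.sqrt (eps * K) ->
  (eps < sr ^+ 2 / (K * q ^+ 2 / 6)) = (0 < q) && (q < u).
Proof.
move=> sr0 e0 K0 q0 ->.
have eK : 0 < eps * K by rewrite mulr_gt0.
have seK : 0 < Num.sqrt (eps * K) by rewrite sqrtr_gt0.
have [qz|qp] : q = 0 \/ 0 < q by move: q0; rewrite le_eqVlt => /orP[/eqP ->|]; [left|right].
  rewrite qz expr0n /= mulr0 mul0r invr0 mulr0 ltxx /=.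
  by apply/negbTE; rewrite -leNgt ltW.
rewrite qp /= ltr_pdivlMr; last by rewrite divr_gt0 // mulr_gt0 // exprn_gt0.
rewrite ltr_pdivlMr //.
rewrite -[RHS](@ltr_pXn2r _ 2) // ?nnegrE; last 2 first.
- by rewrite mulr_ge0 // ?sqrtr_ge0 // ltW.
- by rewrite mulr_ge0 // ?sqrtr_ge0 // ltW.
rewrite !exprMn !sqr_sqrtr //; last by rewrite ltW.
have -> : eps * (K * q ^+ 2 / 6) = (q ^+ 2 * (eps * K)) / 6.
  have h6 : (6 : R) != 0 by rewrite pnatr_eq0. by field.
by rewrite ltr_pdivrMr // [sr ^+ 2 * _]mulrC.
Qed.

Lemma asin_acos (u : R) : -1 <= u <= 1 -> asin u = pi / 2 - acos u.
Proof.
move=> hu.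
have h0 := acos_ge0 hu. have h1 := acos_lepi hu.
have su : sin (pi / 2 - acos u) = u.
  by rewrite -opprB sinN sinBpihalf opprK acosK // in_itv.
rewrite -[in LHS]su sinK // in_itv /=; apply/andP; split; lra.
Qed.
End F.
Section G.
Variable R : realType.
Lemma cos_lt_set (c phi : R) : 0 <= c <= pi/2 -> -(pi/2) < phi < pi/2 ->
  (cos phi < cos c) = ((phi < -c) || (c < phi)).
Proof.
move=> /andP[c0 cb] /andP[h1 h2].
have pi0 : (0 : R) < pi by exact: pi_gt0.
have [p0|p0] := leP 0 phi.
  rewrite ltr_cos ?in_itv /=; last 2 first.
  - by apply/andP; split; lra.
  - by apply/andP; split; lra.
  have -> : (phi < -c) = false by apply/negbTE; rewrite -leNgt; lra.
  by [].
rewrite -cosN ltr_cos ?in_itv /=; last 2 first.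
- by apply/andP; split; lra.
- by apply/andP; split; lra.
have -> : (c < phi) = false by apply/negbTE; rewrite -leNgt; lra.
by rewrite orbF ltrNr.
Qed.
End G.

End M3.
Import M3.

Module M4.
Local Open Scope ring_scope.
Local Open Scope complex_scope.

Lemma CRB_eq (R : realType) (N Ne L : nat) (P tau sr : R) (c4 alpha beta : R[i])
  (theta : R) (h : 'cV[R[i]]_N) (t : 'I_(N - 2) -> 'cV[R[i]]_N) (phi : R) :
  (0 < N)%N -> (forall i, hadj (atil N theta) *m t i = 0) ->
  CRB Ne L P tau sr c4 alpha beta theta h t phi =
       (sr ^+ 2 / (2 * normc c4 ^+ 2 * L%:R * P * tau *
          vnorm (cprime Ne phi) ^+ 2 * normc alpha ^+ 2 * N%:R))%:C.
Proof.
move=> N0 Ht; rewrite /CRB quadRx //.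
have E : forall x y z : R, x%:C / (y%:C * z%:C) = (x / (y * z))%:C.
  by move=> x y z; rewrite fmorph_div rmorphM.
rewrite E; congr (_%:C); congr (_ / _); ring.
Qed.

End M4.
Import M4.

Theorem lemma4 (R : realType) (N Ne L : nat) (P tau sr : R) (c4 alpha beta : R[i])
  (theta : R) (h : 'cV[R[i]]_N) (t : 'I_(N - 2) -> 'cV[R[i]]_N)
  (hpi : - (pi / 2) < pi / 2 :> R) :
  (3 <= N)%N -> (2 <= Ne)%N -> (1 <= L)%N ->
  0 < P -> 0 < tau < 1 -> 0 < sr ->
  c4 != 0 -> normc alpha ^+ 2 + normc beta ^+ 2 = 1 -> alpha != 0 ->
  - (pi / 2) < theta < pi / 2 ->
  (forall z : R[i], h != z *: avec N theta) ->
  (* t_3, ..., t_N: orthonormal basis of span{atil, htil}^perp *)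
  (forall i j, hadj (t i) *m t j = ((i == j)%:R)%:M) ->
  (forall i, hadj (atil N theta) *m t i = 0) ->
  (forall i, hadj (htil theta h) *m t i = 0) ->
  (forall v : 'cV[R[i]]_N, hadj (atil N theta) *m v = 0 ->
     hadj (htil theta h) *m v = 0 ->
     exists c : 'I_(N - 2) -> R[i], v = \sum_(i < N - 2) c i *: t i) ->
  (forall phi : R, - (pi / 2) < phi < pi / 2 ->
     CRB Ne L P tau sr c4 alpha beta theta h t phi =
       (sr ^+ 2 / (2 * normc c4 ^+ 2 * L%:R * P * tau *
          vnorm (cprime Ne phi) ^+ 2 * normc alpha ^+ 2 * N%:R))%:C
     /\ vnorm (cprime Ne phi) ^+ 2 =
          pi ^+ 2 * cos phi ^+ 2 * Ne%:R * (Ne%:R ^+ 2 - 1) / 12) /\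
  (forall eps : R, 0 < eps ->
     let u := Num.sqrt 6 * sr /
       Num.sqrt (eps * Ne%:R * N%:R * pi ^+ 2 * L%:R * P * normc c4 ^+ 2 *
                 normc alpha ^+ 2 * tau * (Ne%:R ^+ 2 - 1)) in
     uniform_prob hpi
       [set phi : R | eps%:C < CRB Ne L P tau sr c4 alpha beta theta h t phi] =
     (if u < 1 then 2 / pi * asin u else 1)%:E).
Proof.
move=> hN hNe hL hP /andP[tau0 tau1] hsr hc4 hab ha0 hth hh horth hat hht hspan.
have N0 : (0 < N)%N by apply: leq_trans hN.
split.
  move=> phi _; split; [exact: CRB_eq | exact: vnorm_cprime].
move=> eps he u.
have pi0 : (0 : R) < pi by exact: pi_gt0.
have nge0 : forall z : R[i], 0 <= normc z by case=> a b; exact: sqrtr_ge0.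
have nc4 : 0 < normc c4.
  rewrite lt_def nge0 andbT; apply/negP => /eqP/Normc.eq0_normc/eqP; exact/negP.
have nal : 0 < normc alpha.
  rewrite lt_def nge0 andbT; apply/negP => /eqP/Normc.eq0_normc/eqP; exact/negP.
have Ne1 : (0 : R) < Ne%:R ^+ 2 - 1.
  rewrite subr_gt0 -natrX ltr1n; apply: (@leq_trans 4) => //.
  by rewrite (_ : 4 = 2 ^ 2)%N // leq_exp2r.
set K := Ne%:R * N%:R * pi ^+ 2 * L%:R * P * normc c4 ^+ 2 * normc alpha ^+ 2 * tau * (Ne%:R ^+ 2 - 1).
have hNe0 : (0:R) < Ne%:R by rewrite ltr0n; exact: leq_trans hNe.
have hN0 : (0:R) < N%:R by rewrite ltr0n.
have hL0 : (0:R) < L%:R by rewrite ltr0n.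
have K0 : 0 < K by rewrite /K !mulr_gt0 // exprn_gt0.
have hu : u = Num.sqrt 6 * sr / Num.sqrt (eps * K).
  by rewrite /u /K; congr (_ / Num.sqrt _); ring.
have u0 : 0 < u.
  have s6 : (0:R) < Num.sqrt 6 by rewrite sqrtr_gt0.
  have se : 0 < Num.sqrt (eps * K) by rewrite sqrtr_gt0 (mulr_gt0 he K0).
  by rewrite hu divr_gt0 // mulr_gt0.
have hS : forall phi, -(pi/2) <= phi <= pi/2 ->
   (eps%:C < CRB Ne L P tau sr c4 alpha beta theta h t phi) =
   (-(pi/2) < phi < pi/2) && (cos phi < u).
  move=> phi hphi.
  rewrite CRB_eq // ltcR vnorm_cprime.
  have -> : 2 * normc c4 ^+ 2 * L%:R * P * tau *
     (pi ^+ 2 * cos phi ^+ 2 * Ne%:R * (Ne%:R ^+ 2 - 1) / 12) * normc alpha ^+ 2 * N%:R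
     = K * cos phi ^+ 2 / 6.
    have h6 : (6 : R) != 0 by rewrite pnatr_eq0.
    have h12 : (12 : R) != 0 by rewrite pnatr_eq0.
    by rewrite /K; field.
  rewrite (key hsr he K0 (cos_ge0_pihalf hphi) hu).
  congr (_ && _).
  case/andP: hphi => h1 h2.
  have [e|ne1] := eqVneq phi (pi/2).
    by rewrite e cos_pihalf ltxx andbF.
  have [e|ne2] := eqVneq phi (-(pi/2)).
    by rewrite e cosN cos_pihalf ltxx.
  have hi : -(pi/2) < phi < pi/2.
    by rewrite !lt_neqAle h1 h2 ne1 eq_sym ne2.
  by rewrite hi cos_gt0_pihalf.
set S := [set phi : R | eps%:C < CRB Ne L P tau sr c4 alpha beta theta h t phi]%classic.
have hU : forall D : set R,
    (forall phi, -(pi/2) <= phi <= pi/2 -> (S phi <-> D phi)) ->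
    uniform_prob hpi S = uniform_prob hpi D.
  move=> D hD; rewrite /uniform_prob integral_uniform_pdf [RHS]integral_uniform_pdf.
  congr (integral _ _ _); apply/seteqP; split => x [Sx abx]; split => //;
    move: (abx); rewrite /= in_itv /= => hx; [exact/(hD x hx).1 | exact/(hD x hx).2].
have pi0' : (pi : R) != 0 by rewrite gt_eqF.
have [u1|u1] := leP u 1.
  set c := acos u.
  have hu1 : -1 <= u <= 1 by apply/andP; split; lra.
  have cu : cos c = u by rewrite /c acosK // in_itv.
  have c0 : 0 <= c := acos_ge0 hu1.
  have cpi : c <= pi := acos_lepi hu1.
  have cb : c < pi / 2.
    have : (cos (pi/2) < cos c) = (c < pi/2).
      by apply: ltr_cos; rewrite in_itv /=; apply/andP; split; lra.
    by rewrite cos_pihalf cu u0 => /esym.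
  rewrite (hU (`]-(pi/2), -c[ `|` `]c, pi/2[)%classic); last first.
    move=> phi hphi; rewrite /S /= hS // -cu; split.
      move=> /andP[hi]; case/andP: (hi) => h1 h2.
      rewrite cos_lt_set //; last by apply/andP; split; lra.
      by case/orP => l; [left|right]; rewrite /= in_itv /=; apply/andP; split; lra.
    case => /=; rewrite in_itv /= => /andP[l r].
      have hi : -(pi/2) < phi < pi/2 by apply/andP; split; lra.
      rewrite hi /= cos_lt_set //; last by apply/andP; split; lra.
      by rewrite r.
    have hi : -(pi/2) < phi < pi/2 by apply/andP; split; lra.
    rewrite hi /= cos_lt_set //; last by apply/andP; split; lra.
    by rewrite l orbT.
  rewrite prob_two; last by apply/andP; split.
  have [u2|u2] := ltP u 1.
    rewrite (asin_acos hu1) -/c; congr (_%:E); field; rewrite /= ?mulr1n -pihalfE gt_eqF // divr_gt0 // ?pi_gt0.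
  have ue : u = 1 by apply/eqP; rewrite eq_le u1 u2.
  have -> : c = 0 by rewrite /c ue acos1.
  by congr (_%:E); rewrite mulr0 subr0 divff.
rewrite ltNge (ltW u1) /=.
rewrite (hU (`]-(pi/2), pi/2[)%classic); last first.
  move=> phi hphi; rewrite /S /= hS // in_itv /=.
  have -> : cos phi < u by apply: le_lt_trans (cos_le1 _) u1.
  by rewrite andbT.
have h1 : -(pi/2) <= -(pi/2) :> R by [].
have h2 : pi/2 <= pi/2 :> R by [].
have h3 : -(pi/2) <= pi/2 :> R by exact: ltW.
rewrite (prob_itv hpi h1 h2 h3); congr (_%:E).
have -> : pi / 2 - - (pi / 2) = (pi : R) by lra.
by rewrite divff.
Qed.
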